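(* Let $\kappa=(\xi,\eta)\in S\mathbb{H}$, regarded as a $2\times1$ column vector, and let $\check\kappa=(\eta',-\xi')$, also regarded as a column. Then there exists a $1\times2$ row vector $\tau=(\alpha,\beta)\in\mathbb{H}^2$ such that exactly one of $\tau\kappa=\alpha\xi+\beta\eta$ and $\tau\check\kappa=\alpha\eta'-\beta\xi'$ is zero.
   Context: For $q=a+bi+cj+dk\in\mathbb{H}$, $q'=a-bi-cj+dk$, $\bar q=a-bi-cj-dk$. $\mathcal{V}=\mathrm{span}_\mathbb{R}\{1,i,j\}$. $S\mathbb{H}=\{(\xi,\eta)\in\mathbb{H}^2\setminus\{(0,0)\}:\xi\bar\eta\in\mathcal{V}\}$. *)

(* Defs.v *)
From Stdlib Require Import Reals Lra.
Open Scope R_scope.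

(* q = a + b i + c j + d k *)
Record quat := Quat { qa : R; qb : R; qc : R; qd : R }.

Definition q0 : quat := Quat 0 0 0 0.

Definition qadd (p q : quat) : quat :=
  Quat (qa p + qa q) (qb p + qb q) (qc p + qc q) (qd p + qd q).

Definition qopp (p : quat) : quat := Quat (- qa p) (- qb p) (- qc p) (- qd p).

(* Hamilton product: i^2 = j^2 = k^2 = ijk = -1 *)
Definition qmul (p q : quat) : quat :=
  Quat (qa p * qa q - qb p * qb q - qc p * qc q - qd p * qd q)
       (qa p * qb q + qb p * qa q + qc p * qd q - qd p * qc q)
       (qa p * qc q - qb p * qd q + qc p * qa q + qd p * qb q)
       (qa p * qd q + qb p * qc q - qc p * qb q + qd p * qa q).

Definition qconj (q : quat) : quat := Quat (qa q) (- qb q) (- qc q) (- qd q).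

Definition qprime (q : quat) : quat := Quat (qa q) (- qb q) (- qc q) (qd q).

Definition inV (q : quat) : Prop := qd q = 0.

Definition inSH (xi eta : quat) : Prop :=
  (xi, eta) <> (q0, q0) /\ inV (qmul xi (qconj eta)).

(* Main.v *)
Require Import Defs.
From Stdlib Require Import Reals.
From Stdlib Require Import Lra Psatz Classical.

Definition nq (q : quat) : R := qa q * qa q + qb q * qb q + qc q * qc q + qd q * qd q.

Lemma nq_pos q : q <> q0 -> 0 < nq q.
Proof.
  destruct q as [a b c d]; unfold nq, q0; simpl; intro H.
  destruct (Req_dec a 0); destruct (Req_dec b 0); destruct (Req_dec c 0);
  destruct (Req_dec d 0); subst; try (exfalso; now apply H); nra.
Qed.

Lemma key (x y : quat) : inV (qmul x (qconj y)) -> x <> q0 -> y <> q0 ->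
  qadd (qmul (qopp (qmul y (qconj x))) (qprime y))
       (qmul (Quat (nq x) 0 0 0) (qopp (qprime x))) <> q0.
Proof.
  intros HV Hx Hy HT.
  pose proof (nq_pos _ Hx) as Px. pose proof (nq_pos _ Hy) as Py.
  set (T := qadd _ _) in HT.
  assert (HR : qmul T (qconj (qprime y)) = q0) by (rewrite HT; unfold q0, qmul, qconj, qprime; simpl; f_equal; ring).
  set (w := qmul x (qconj y)) in HV.
  assert (Ea : (nq x + nq y) * qa w = - qa (qmul T (qconj (qprime y)))) by
    (unfold T, w, nq; destruct x, y; simpl; ring).
  assert (Eb : (nq x + nq y) * qb w = qb (qmul T (qconj (qprime y)))) by
    (unfold T, w, nq; destruct x, y; simpl; ring).
  assert (Ec : (nq x + nq y) * qc w = qc (qmul T (qconj (qprime y)))) by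
    (unfold T, w, nq; destruct x, y; simpl; ring).
  rewrite HR in Ea, Eb, Ec; simpl in Ea, Eb, Ec.
  assert (Wn : qa w * qa w + qb w * qb w + qc w * qc w + qd w * qd w = nq x * nq y) by
    (unfold w, nq; destruct x, y; simpl; ring).
  unfold inV in HV.
  assert (Hs : nq x + nq y <> 0) by lra.
  assert (qa w = 0) by (destruct (Rmult_integral _ _ (eq_trans Ea Ropp_0)); [contradiction|assumption]).
  assert (qb w = 0) by (destruct (Rmult_integral _ _ Eb); [contradiction|assumption]).
  assert (qc w = 0) by (destruct (Rmult_integral _ _ Ec); [contradiction|assumption]).
  rewrite H, H0, H1, HV in Wn. nra.
Qed.

Theorem lemma3p8 (xi eta : quat) (hk : inSH xi eta) :
  exists alpha beta : quat,
    let tk := qadd (qmul alpha xi) (qmul beta eta) in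
    let tkc := qadd (qmul alpha (qprime eta)) (qmul beta (qopp (qprime xi))) in
    (tk = q0 /\ tkc <> q0) \/ (tk <> q0 /\ tkc = q0).
Proof.
  destruct hk as [Hne HV].
  destruct (classic (eta = q0)) as [He|He].
  - subst eta. assert (Hx : xi <> q0) by (intro; subst; apply Hne; reflexivity).
    exists (Quat 1 0 0 0), q0. simpl. right. split.
    + intro H; apply Hx; rewrite <- H; destruct xi; unfold qadd, qmul, q0; simpl; f_equal; ring.
    + unfold qadd, qmul, q0, qprime, qopp; simpl; f_equal; ring.
  - destruct (classic (xi = q0)) as [Hx|Hx].
    + subst xi. exists (Quat 1 0 0 0), q0. simpl. left. split.
      * unfold qadd, qmul, q0; simpl; f_equal; ring.
      * intro H. apply He. destruct eta as [a b c d]. unfold qadd, qmul, q0, qprime, qopp in H; simpl in H.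
        injection H; intros. unfold q0; f_equal; lra.
    + exists (qopp (qmul eta (qconj xi))), (Quat (nq xi) 0 0 0). simpl. left. split.
      * destruct xi, eta; unfold qadd, qmul, q0, qopp, qconj, nq; simpl; f_equal; ring.
      * apply key; assumption.
Qed.
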